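(* Let $n\ge3$ and let $(X_1,\dots,X_n)$ be a stationary Markov chain on $\{0,1\}$ with transition probabilities $\Pr(X_{i+1}=1\mid X_i=0)=\frac{1}{n+1}$, $\Pr(X_{i+1}=1\mid X_i=1)=\frac{2}{n+1}$, and with each $X_i\sim\mathrm{Bernoulli}(1/n)$ (the stationary distribution). Let $S_n=\sum_{i=1}^nX_i$. Then $$D(P_{S_n}\,\|\,\mathrm{Po}(1))\le3\frac{\log n}{n}+\frac1n.$$
   Context: $\mathrm{Po}(1)$ is the Poisson distribution with mean 1; $D(P\|Q)=\sum_xP(x)\log\frac{P(x)}{Q(x)}$ is relative entropy with natural logarithm. *)

(* Defs.v *)
From mathcomp Require Import all_boot all_order all_algebra.
From mathcomp Require Import all_classical all_reals all_analysis.
Set Implicit Arguments. Unset Strict Implicit. Unset Printing Implicit Defensive.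
Import Order.TTheory GRing.Theory Num.Theory.
Local Open Scope ring_scope.

Section MC.
Variable R : realType.

Definition mc_trans (n : nat) (a b : bool) : R :=
  let p := if a then 2 / n.+1%:R else 1 / n.+1%:R in
  if b then p else 1 - p.

Definition mc_init (n : nat) (a : bool) : R :=
  if a then 1 / n%:R else 1 - 1 / n%:R.

Definition mc_joint (n : nat) (x : n.-tuple bool) : R :=
  mc_init n (nth false x 0) *
  \prod_(0 <= i < n.-1) mc_trans n (nth false x i) (nth false x i.+1).

Definition law_Sn (n k : nat) : R :=
  \sum_(x : n.-tuple bool | count id x == k) mc_joint x.

Definition poisson1 (k : nat) : R := expR (-1) / (k`!)%:R.

(* D(P_{S_n} || Po(1)) with natural log, convention 0 log 0 = 0;
   S_n takes values in {0,...,n} *)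
Definition relent_Sn_Po1 (n : nat) : R :=
  \sum_(k < n.+1)
    (if law_Sn n k == 0 then 0 else law_Sn n k * ln (law_Sn n k / poisson1 k)).

End MC.

(* Main.v *)
Require Import Defs.
From mathcomp Require Import all_boot all_order all_algebra.
From mathcomp Require Import all_classical all_reals all_analysis.
From mathcomp Require Import ring lra.
Import Order.TTheory GRing.Theory Num.Theory.
Local Open Scope ring_scope.

Section Aux.
Variable R : realType.

Lemma take_sz {m} (x : m.+1.-tuple bool) : size (take m x) == m.
Proof. by rewrite size_take size_tuple ltnSn. Qed.

Definition tsplit m (x : m.+1.-tuple bool) : m.-tuple bool * bool :=
  (Tuple (take_sz x), seq.last false x).

Lemma rcons_take_last m (x : m.+1.-tuple bool) :
  rcons (take m x) (seq.last false x) = x.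
Proof.
case: x => s /= /eqP hs.
case/lastP: s hs => [|s b]; first by [].
rewrite size_rcons => -[<-]; by rewrite seq.last_rcons -[rcons s b]cats1 take_size_cat // cats1.
Qed.

Lemma sum_rcons m (F : seq bool -> R) :
  \sum_(x : m.+1.-tuple bool) F x =
  \sum_(y : m.-tuple bool) (F (rcons y true) + F (rcons y false)).
Proof.
rewrite (reindex (fun p : m.-tuple bool * bool => rcons_tuple p.1 p.2)) /=.
  rewrite -(pair_bigA _ (fun (y : m.-tuple bool) b => F (rcons y b))) /=.
  by apply: eq_bigr => y _; rewrite big_bool.
exists (@tsplit m) => [[y b] _|x _].
  rewrite /tsplit; congr pair; last by rewrite seq.last_rcons.
  apply: val_inj => /=; by rewrite -cats1 take_size_cat ?size_tuple.
apply: val_inj => /=; exact: rcons_take_last.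
Qed.

Lemma sum_tuple0 (F : seq bool -> R) :
  \sum_(x : 0.-tuple bool) F x = F [::].
Proof.
rewrite (eq_bigr (fun _ => F [::])) => [|x _]; last by rewrite tuple0.
by rewrite sumr_const card_tuple expn0.
Qed.
Lemma ffact_le_exp (n k : nat) : (n ^_ k <= n ^ k)%N.
Proof.
elim: k => [|k IH]; first by rewrite ffactn0.
by rewrite ffactnSr expnSr leq_mul // leq_subr.
Qed.

Lemma ln_ge_1V (y : R) : 0 < y -> 1 - y^-1 <= ln y.
Proof.
move=> hy.
have h : ln (1 + (y^-1 - 1)) <= y^-1 - 1.
  apply: le_ln1Dx; rewrite ltrBrDr addNr invr_gt0 //.
move: h; rewrite addrC subrK lnV ?posrE //; lra.
Qed.

Lemma log_sum (I : finType) (P : pred I) (a b : I -> R) :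
  (forall i, P i -> 0 < a i) -> (forall i, P i -> 0 < b i) ->
  0 < \sum_(i | P i) a i -> 0 < \sum_(i | P i) b i ->
  (\sum_(i | P i) a i) * ln ((\sum_(i | P i) a i) / (\sum_(i | P i) b i))
  <= \sum_(i | P i) a i * ln (a i / b i).
Proof.
set A := \sum_(i | P i) a i; set B := \sum_(i | P i) b i => ha hb hA hB.
rewrite -subr_ge0 mulr_suml -sumrB.
have hz : \sum_(i | P i) (a i - b i * (A / B)) = 0.
  by rewrite sumrB -mulr_suml -/A -/B mulrCA mulfV ?gt_eqF // mulr1 subrr.
rewrite -[X in X <= _]hz.
apply: ler_sum => i Pi.
have hai := ha i Pi; have hbi := hb i Pi.
rewrite -mulrBr -ln_div ?posrE ?divr_gt0 //.
have := @ln_ge_1V _ (divr_gt0 (divr_gt0 hai hbi) (divr_gt0 hA hB)).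
move=> h; apply: le_trans (ler_wpM2l (ltW hai) h).
rewrite le_eqVlt; apply/orP; left; apply/eqP; field.
by rewrite !gt_eqF.
Qed.

Lemma e_bound : 1 <= 2 * ln (2 : R).
Proof.
have h : expR (1/2 : R) <= 2.
  have := expR_ge1Dx (- (1/2) : R); rewrite expRN => h.
  have ht := expR_gt0 (1/2 : R).
  have := ler_wpM2l (ltW ht) h; rewrite mulfV ?gt_eqF //; lra.
have := h; rewrite -ler_ln ?posrE ?expR_gt0 // expRK; lra.
Qed.


Lemma count_sum m k : \sum_(x : m.-tuple bool) (if count id x == k then 1 else 0 : R)
  = 'C(m, k)%:R.
Proof.
elim: m k => [|m IH] k.
  rewrite (sum_tuple0 (fun x : seq bool => if count id x == k then 1 else 0 : R)) /=.
  by rewrite bin0n eq_sym; case: (k == 0%N).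
rewrite (sum_rcons m (fun x : seq bool => if count id x == k then 1 else 0 : R)).
case: k => [|k].
  transitivity ('C(m, 0)%:R : R); last by rewrite !bin0.
  rewrite -(IH 0%N); apply: eq_bigr => y _.
  by rewrite -!cats1 !count_cat /= !addn0 addn1 /= add0r.
rewrite binS natrD -!IH -big_split /=; apply: eq_bigr => y _.
by rewrite -!cats1 !count_cat /= !addn0 addn1 eqSS addrC.
Qed.
End Aux.

Section Chain.
Variable R : realType.
Variable n : nat.
Hypothesis hn : (3 <= n)%N.
Local Notation N := (n%:R : R).
Local Notation N1 := (n.+1%:R : R).
Local Notation T := (mc_trans R n).

Definition J (s : seq bool) : R := mc_init R n (nth false s 0) *
  \prod_(0 <= i < (size s).-1) T (nth false s i) (nth false s i.+1).

Definition N11 (s : seq bool) : nat :=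
  \sum_(0 <= i < (size s).-1) (nth false s i && nth false s i.+1).

Lemma J_rcons s b : (0 < size s)%N ->
  J (rcons s b) = J s * T (seq.last false s) b.
Proof.
move=> hs; rewrite /J size_rcons.
have [k hk] : exists k, size s = k.+1 by case: s hs => // a s _; exists (size s).
rewrite hk /= big_nat_recr //= -mulrA; congr (_ * (_ * _)).
- by rewrite nth_rcons hk.
  apply: eq_big_nat => i /andP[_ hi].
  by rewrite !nth_rcons hk (ltn_trans hi (ltnSn k)) ltnS hi.
by rewrite !nth_rcons hk ltnSn ltnn eqxx -nth_last hk.
Qed.

Lemma N11_rcons s b : (0 < size s)%N ->
  N11 (rcons s b) = (N11 s + (seq.last false s && b))%N.
Proof.
move=> hs; rewrite /N11 size_rcons.
have [k hk] : exists k, size s = k.+1 by case: s hs => // a s _; exists (size s).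
rewrite hk /= big_nat_recr //=; congr (_ + _)%N.
  apply: eq_big_nat => i /andP[_ hi].
  by rewrite !nth_rcons hk (ltn_trans hi (ltnSn k)) ltnS hi.
by rewrite !nth_rcons hk ltnSn ltnn eqxx -nth_last hk.
Qed.

Lemma N_gt0 : 0 < N. Proof. by rewrite ltr0n; apply: leq_trans hn. Qed.
Lemma N1_gt0 : 0 < N1. Proof. by rewrite ltr0n. Qed.
Lemma N1E : N1 = N + 1. Proof. by rewrite -natr1. Qed.
Lemma N_ge3 : 3 <= N. Proof. by rewrite (ler_nat R 3). Qed.

Lemma init_gt0 a : 0 < mc_init R n a.
Proof.
have h3 := N_ge3; have h0 := N_gt0.
case: a; rewrite /mc_init; first by rewrite divr_gt0.
rewrite subr_gt0 ltr_pdivrMr // mul1r; lra.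
Qed.

Lemma trans_gt0 a b : 0 < T a b.
Proof.
have h3 := N_ge3; have h1 := N1_gt0; rewrite N1E in h1 *.
case: a; case: b; rewrite /mc_trans /=; rewrite ?subr_gt0 ?divr_gt0 //;
  rewrite ?ltr_pdivrMr // ?mul1r; lra.
Qed.

Lemma J_gt0 s : 0 < J s.
Proof.
rewrite /J mulr_gt0 ?init_gt0 //; apply: prodr_gt0 => i _; exact: trans_gt0.
Qed.

Lemma trans_sum a : T a true + T a false = 1.
Proof. by case: a; rewrite /mc_trans /=; ring. Qed.

Definition bR (b : bool) : R := (b : nat)%:R.

Lemma sum1 m : \sum_(x : m.+1.-tuple bool) J x = 1.
Proof.
elim: m => [|m IH].
  rewrite (sum_rcons R 0 J) (sum_tuple0 R (fun y => J (rcons y true) + J (rcons y false))).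
  by rewrite /J /= !big_geq //= !mulr1 /mc_init /=; ring.
rewrite (sum_rcons R m.+1 J) -{}IH; apply: eq_bigr => y _.
by rewrite !J_rcons ?size_tuple // -mulrDr trans_sum mulr1.
Qed.

Lemma sum_last m : \sum_(x : m.+1.-tuple bool) J x * bR (seq.last false x) = 1 / N.
Proof.
pose F := fun x => J x * bR (seq.last false x).
elim: m => [|m IH].
  rewrite (sum_rcons R 0 F) (sum_tuple0 R (fun y => F (rcons y true) + F (rcons y false))).
  by rewrite /F /J /= !big_geq //= /bR /mc_init /=; ring.
rewrite (sum_rcons R m.+1 F).
have h1 := sum1 m.
have -> : 1 / N = T true true * (1 / N) + T false true * (1 - 1/N).
  rewrite /mc_trans /=; have := N_gt0; have := N1_gt0; rewrite N1E => ? ?.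
  field; lra.
rewrite -IH -h1 mulr_sumr -sumrB mulr_sumr -big_split /=.
apply: eq_bigr => y _.
rewrite /F !J_rcons ?size_tuple // !seq.last_rcons /bR /=.
by case: (seq.last false y) => /=; ring.
Qed.

Lemma sum_N11 m : \sum_(x : m.+1.-tuple bool) J x * (N11 x)%:R =
  m%:R * (T true true * (1 / N)).
Proof.
pose F := fun x => J x * (N11 x)%:R.
elim: m => [|m IH].
  rewrite (sum_rcons R 0 F) (sum_tuple0 R (fun y => F (rcons y true) + F (rcons y false))).
  by rewrite /F /N11 /= !big_geq //= /mc_init /=; ring.
rewrite (sum_rcons R m.+1 F).
have hl := sum_last m; rewrite mul1r in hl IH *.
rewrite -natr1 mulrDl mul1r -IH -hl mulr_sumr -big_split /=.
apply: eq_bigr => y _.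
rewrite /F !J_rcons ?size_tuple // !N11_rcons ?size_tuple // /bR.
by case: (seq.last false y) => /=; rewrite ?addn0 ?addn1 -?natr1; ring.
Qed.


Lemma le_from (x y c : R) : 0 <= c -> y - x = c / (N + 1) -> x <= y.
Proof.
move=> hc e; rewrite -subr_ge0 e divr_ge0 //; have := N_ge3; lra.
Qed.

Lemma trans_bound a b : T a b * N ^+ b <= (N / N1) * 2 ^+ (a && b).
Proof.
have h3 := N_ge3; have h1 := N1_gt0; rewrite N1E in h1 *.
case: a; case: b; rewrite /mc_trans /= ?expr0 ?expr1 ?mulr1.
- by apply: (@le_from _ _ 0); [lra | field; lra].
- by apply: (@le_from _ _ 1); [lra | field; lra].
- by apply: (@le_from _ _ 0); [lra | field; lra].
- by apply: (@le_from _ _ 0); [lra | field; lra].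
Qed.

Lemma count_rcons (s : seq bool) b : count id (rcons s b) = (count id s + b)%N.
Proof. by rewrite -cats1 count_cat /= addn0. Qed.

Lemma pointwise s : (0 < size s)%N ->
  J s * N ^+ count id s <= (N / N1) ^+ (size s).-1 * 2 ^+ N11 s.
Proof.
elim/last_ind: s => [//|s b IH] _.
case: (posnP (size s)) => [/eqP|hs].
  rewrite size_eq0 => /eqP ->; rewrite /J /N11 /= !big_geq //= mulr1 !expr0 mulr1.
  have := N_gt0; case: b; rewrite /mc_init /= ?expr1 ?expr0 ?mulr1.
    by move=> h; rewrite mul1r mulVf ?gt_eqF.
  move=> h; rewrite -subr_ge0; have : 0 <= 1 / N by rewrite divr_ge0 // ltW.
  lra.
rewrite J_rcons // count_rcons N11_rcons // size_rcons exprD exprD.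
have e : (size s).+1.-1 = (size s).-1.+1 by rewrite prednK.
rewrite e exprSr mulrACA [X in _ <= X]mulrACA.
apply: ler_pM.
- by rewrite mulr_ge0 // ?exprn_ge0 // ltW // (J_gt0, N_gt0).
- by rewrite mulr_ge0 // ?exprn_ge0 // ltW // (trans_gt0, N_gt0).
- exact: IH.
- exact: trans_bound.
Qed.


Definition Q (x : seq bool) : R := expR (-1) / N ^+ count id x.

Lemma Q_gt0 x : 0 < Q x.
Proof. by rewrite /Q divr_gt0 ?expR_gt0 // exprn_gt0 // N_gt0. Qed.

Lemma sumQ (k : nat) : \sum_(x : n.-tuple bool | count id x == k) Q x
  = expR (-1) / N ^+ k * 'C(n, k)%:R.
Proof.
rewrite big_mkcond /= -count_sum mulr_sumr; apply: eq_bigr => x _.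
by rewrite /Q; case: eqP => [->|_]; rewrite ?mulr1 ?mulr0.
Qed.

Lemma relent_le : relent_Sn_Po1 R n <=
  \sum_(x : n.-tuple bool) J x * ln (J x / Q x).
Proof.
rewrite (partition_big (fun x : n.-tuple bool => (inord (count id x) : 'I_n.+1)) xpredT) //.
rewrite /relent_Sn_Po1; apply: ler_sum => k _.
have ek : forall x : n.-tuple bool, (inord (count id x) == k) = (count id x == k).
  move=> x; rewrite -val_eqE /= inordK // ltnS.
  by have := count_size id x; rewrite size_tuple.
rewrite (eq_bigl (fun x : n.-tuple bool => count id x == k)) => [|x]; last by rewrite ek.
have eL : law_Sn R n k = \sum_(x : n.-tuple bool | count id x == k) J x.
  by apply: eq_bigr => x _; rewrite /mc_joint /J size_tuple.
case: eqP => [L0|Lne].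
  rewrite big1 // => x hx.
  have := psumr_eq0P (fun (x : n.-tuple bool) _ => ltW (J_gt0 x)) (etrans (esym eL) L0) hx.
  by move=> h; rewrite h mul0r.
have Lpos : 0 < law_Sn R n k.
  by rewrite lt_def; apply/andP; split; [apply/eqP | rewrite eL sumr_ge0 // => x _; exact: ltW (J_gt0 x)].
set B := \sum_(x : n.-tuple bool | count id x == k) Q x.
have eB := sumQ k.
have hk : (k <= n)%N by rewrite -ltnS.
have Bpos : 0 < B.
  rewrite /B eB mulr_gt0 ?divr_gt0 ?expR_gt0 ?exprn_gt0 ?N_gt0 //.
  by rewrite ltr0n bin_gt0.
have Bpo : B <= poisson1 R k.
  rewrite /B eB /poisson1 -mulrA ler_pM2l ?expR_gt0 //.
  have hf : (0 : R) < (k`!)%:R by rewrite ltr0n fact_gt0.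
  have hNk : 0 < N ^+ k by rewrite exprn_gt0 // N_gt0.
  rewrite mulrC ler_pdivrMr // mulrC ler_pdivlMr //. rewrite -natrX -natrM ler_nat.
  rewrite bin_ffact; exact: ffact_le_exp.
have popos : 0 < poisson1 R k by rewrite /poisson1 divr_gt0 ?expR_gt0 // ltr0n fact_gt0.
apply: le_trans (@log_sum R (n.-tuple bool) (fun x => count id x == k) (fun x => J x) (fun x => Q x) _ _ _ _); last first.
- by rewrite -/B.
- by rewrite -eL.
- by move=> x _; exact: Q_gt0.
- by move=> x _; exact: J_gt0.
rewrite -eL -/B; apply: ler_wpM2l; first exact: ltW.
rewrite ler_ln ?posrE ?divr_gt0 // ler_pM2l // lef_pV2 ?posrE //.
Qed.


Lemma G_le : \sum_(x : n.-tuple bool) J x * ln (J x / Q x) <=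
  1 + (n.-1)%:R * ln (N / N1) + ln 2 * ((n.-1)%:R * (T true true * (1 / N))).
Proof.
have S1 := sum1 (n.-1); rewrite prednK ?(leq_trans _ hn) // in S1.
have SN := sum_N11 (n.-1); rewrite prednK ?(leq_trans _ hn) // in SN.
set c0 := 1 + (n.-1)%:R * ln (N / N1).
apply: le_trans (_ : _ <= \sum_(x : n.-tuple bool) J x * (c0 + ln 2 * (N11 x)%:R)) _; last first.
  rewrite le_eqVlt; apply/orP; left; apply/eqP.
  transitivity (c0 * (\sum_(x : n.-tuple bool) J x) +
    ln 2 * (\sum_(x : n.-tuple bool) J x * (N11 x)%:R)).
    by rewrite !mulr_sumr -big_split; apply: eq_bigr => x _ /=; ring.
  by rewrite S1 SN mulr1.
apply: ler_sum => x _.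
apply: ler_wpM2l; first exact: ltW (J_gt0 x).
have hx : (0 < size x)%N by rewrite size_tuple (leq_trans _ hn).
have hp := @pointwise x hx; rewrite size_tuple in hp.
have hNc : 0 < N ^+ count id x by rewrite exprn_gt0 // N_gt0.
have e : J x / Q x = J x * N ^+ count id x * expR 1.
  by rewrite /Q invf_div expRN invrK mulrA.
have hr : 0 < N / N1 by rewrite divr_gt0 ?N_gt0 ?N1_gt0.
rewrite e; apply: le_trans (_ : ln ((N / N1) ^+ n.-1 * 2 ^+ N11 x * expR 1) <= _).
  have hJ := J_gt0 x.
  have p1 : 0 < J x * N ^+ count id x * expR 1.
    by apply: mulr_gt0; [apply: mulr_gt0 | exact: expR_gt0].
  have p2 : 0 < (N / N1) ^+ n.-1 * 2 ^+ N11 x * expR 1.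
    apply: mulr_gt0; [apply: mulr_gt0; apply: exprn_gt0 => // | exact: expR_gt0].
  rewrite ler_ln ?posrE //; rewrite ler_pM2r; [exact: hp | exact: expR_gt0].
have q1 : 0 < (N / N1) ^+ n.-1 by apply: exprn_gt0.
have q2 : 0 < (2 : R) ^+ N11 x by apply: exprn_gt0.
rewrite lnM ?posrE ?expR_gt0 //; last exact: mulr_gt0.
rewrite lnM ?posrE // expRK (lnXn _ hr).
have h2 : (0:R) < 2 by [].
rewrite (lnXn _ h2) /c0 -[ln (N / N1) *+ _]mulr_natl -[ln 2 *+ _]mulr_natl.
move: (ln (N / N1)) (ln (2:R)) ((n.-1)%:R : R) ((N11 x)%:R : R) => a u p q.
rewrite le_eqVlt; apply/orP; left; apply/eqP; ring.
Qed.

Lemma final_arith :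
  1 + (n.-1)%:R * ln (N / N1) + ln 2 * ((n.-1)%:R * (T true true * (1 / N)))
  <= 3 * (ln N / N) + 1 / N.
Proof.
have hN := N_gt0; have h3 := N_ge3; have hN1 := N1_gt0.
have eN1 := N1E.
set M := (n.-1)%:R.
have eM : N = M + 1 by rewrite /M natr1 prednK // (leq_trans _ hn).
set a := ln (N / N1); set u := ln (2 : R); set v := ln N.
set s := 1 / N1; set t := 1 / N.
have hs : 0 < s by rewrite /s divr_gt0.
have ht : 0 < t by rewrite /t divr_gt0.
have hsN : s * N1 = 1 by rewrite /s mul1r mulVf ?gt_eqF.
have htN : t * N = 1 by rewrite /t mul1r mulVf ?gt_eqF.
have ha : a <= - s.
  have := @le_ln1Dx R (- s); rewrite /a.
  have -> : 1 + - s = N / N1 by rewrite /s eN1; field; rewrite gt_eqF // -eN1.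
  apply; rewrite /s ltrN2 ltr_pdivrMr // mul1r eN1; lra.
have hu : 1 <= 2 * u by exact: e_bound.
have hu0 : 0 <= u by rewrite /u ln_ge0 //; lra.
have h4u : 4 * u <= 3 * v.
  have h16 : 4 * u = ln ((2 : R) ^+ 4) by rewrite lnXn // mulr_natl.
  have h27 : 3 * v >= ln ((3 : R) ^+ 3).
    rewrite lnXn // -[ln 3 *+ 3]mulr_natl ler_pM2l // /v ler_ln ?posrE //.
  rewrite h16; apply: le_trans h27; rewrite ler_ln ?posrE ?exprn_gt0 //.
  by rewrite -subr_ge0; (have -> : (3 : R) ^+ 3 - 2 ^+ 4 = 11 by rewrite !exprS expr0; ring); lra.
have hM : 0 <= M by rewrite /M ler0n.
have f1 : M * a <= - (M * s) by rewrite -mulrN ler_wpM2l.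
have f2 : M * s = 1 - 2 * s.
  have hM2 : 0 < M + 1 + 1 by lra.
  by rewrite /s eN1 eM; field; rewrite gt_eqF.
have hst : s <= t.
  rewrite /s /t ler_pdivrMr // mulrC mulrA ler_pdivlMr // !mul1r eN1; lra.
have f3 : u * (M * (T true true * t)) <= 2 * u * t.
  have -> : T true true = 2 * s.
    by rewrite /mc_trans /s /= mul1r.
  have -> : u * (M * (2 * s * t)) = (2 * u * t) * (M * s) by ring.
  rewrite -[X in _ <= X]mulr1; apply: ler_wpM2l; last by rewrite f2; lra.
  by apply: mulr_ge0; [lra | exact: ltW].
have f4 : t * (1 + 2 * u) <= t * (3 * v) by apply: ler_wpM2l; [exact: ltW | lra].
rewrite (_ : ln N / N = v * t); last by rewrite /t mul1r.
lra.
Qed.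

End Chain.

Theorem mainTheorem13 (R : realType) (n : nat) (hn : (3 <= n)%N) :
  relent_Sn_Po1 R n <= 3 * (ln (n%:R : R) / n%:R) + 1 / n%:R.
Proof.
apply: le_trans (@relent_le R n hn) _.
apply: le_trans (@G_le R n hn) _.
exact: (@final_arith R n hn).
Qed.
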